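(* Let $(\Omega, \Sigma, \mu, S)$ be a dynamical system which is asymptotically stationary. Let $\Pi \subset \Sigma$ be a $\pi$-system such that $\sigma(\Pi) = \Sigma$ and $$\lim_{k \to \infty} \sup_{i \in \mathbb{N}} \left|\mu(S^{-i}A \cap S^{-k}S^{-i}B) - \mu(S^{-i}A)\,\mu(S^{-k}S^{-i}B)\right| = 0$$ for all $A, B \in \Pi$. Then this limit relation holds for all $A, B \in \Sigma$.
   Context: A dynamical system $(\Omega,\Sigma,\mu,S)$ consists of a probability space $(\Omega,\Sigma,\mu)$ and a measurable map $S:\Omega\to\Omega$; $S^k$ denotes the $k$-fold composition and $S^{-k}A=(S^k)^{-1}(A)$. It is asymptotically stationary (with stationary limit $\nu$) if $\nu(A)=\lim_{k\to\infty}\mu(S^{-k}A)$ exists for every $A\in\Sigma$. $\mathbb{N}=\{1,2,\dots\}$. $\sigma(\Pi)$ is the $\sigma$-algebra generated by $\Pi$. *)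

(* Defs.v *)
From HB Require Import structures.
From mathcomp Require Import all_boot all_order all_algebra.
From mathcomp Require Import all_classical all_reals all_analysis.
Set Implicit Arguments. Unset Strict Implicit. Unset Printing Implicit Defensive.
Import Order.TTheory GRing.Theory Num.Theory.

Local Open Scope classical_set_scope.
Local Open Scope ereal_scope.

Definition preiter (T : Type) (S : T -> T) (k : nat) (A : set T) : set T :=
  (iter k S) @^-1` A.

Definition asymptotically_stationary (d : measure_display) (T : measurableType d)
  (R : realType) (mu : probability T R) (S : T -> T) : Prop :=
  forall A, measurable A ->
    exists l : \bar R, (fun k => mu (preiter S k A)) @ \oo --> l.

Definition mixing_sup (d : measure_display) (T : measurableType d)
  (R : realType) (mu : probability T R) (S : T -> T) (A B : set T) (k : nat)
  : \bar R :=
  ereal_sup [set `| mu (preiter S i A `&` preiter S k (preiter S i B))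
                   - mu (preiter S i A) * mu (preiter S k (preiter S i B)) |
            | i in [set i : nat | (0 < i)%N]].

(* Main.v *)
Require Import Defs.
From HB Require Import structures.
From mathcomp Require Import all_boot all_order all_algebra.
From mathcomp Require Import all_classical all_reals all_analysis.
From mathcomp Require Import ring lra.
Import Order.TTheory GRing.Theory Num.Theory.
Set Implicit Arguments. Unset Strict Implicit. Unset Printing Implicit Defensive.
Local Open Scope classical_set_scope.
Local Open Scope ring_scope.

Definition m0 d (T : measurableType d) (R : realType) (mu : probability T R)
  (X : set T) : R := fine (mu X).
Arguments m0 {d T R} mu X.

Lemma m0E d (T : measurableType d) (R : realType) (mu : probability T R) X :
  measurable X -> mu X = (m0 mu X)%:E.
Proof. by move=> mX; rewrite /m0 fineK // fin_num_measure. Qed.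

Lemma m0_ge0 d (T : measurableType d) (R : realType) (mu : probability T R) X :
  0 <= m0 mu X.
Proof. by rewrite /m0 fine_ge0. Qed.

Lemma m0_le1 d (T : measurableType d) (R : realType) (mu : probability T R) X :
  measurable X -> m0 mu X <= 1.
Proof. by move=> mX; rewrite -lee_fin -m0E // probability_le1. Qed.

Lemma m0U d (T : measurableType d) (R : realType) (mu : probability T R) X Y :
  measurable X -> measurable Y -> X `&` Y = set0 ->
  m0 mu (X `|` Y) = m0 mu X + m0 mu Y.
Proof.
move=> mX mY XY; apply/eqP; rewrite -eqe EFinD -!m0E //; last exact: measurableU.
by rewrite measureU.
Qed.

Lemma m0_le d (T : measurableType d) (R : realType) (mu : probability T R) X Y :
  measurable X -> measurable Y -> X `<=` Y -> m0 mu X <= m0 mu Y.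
Proof.
move=> mX mY XY; rewrite -lee_fin -!m0E //; apply: le_measure => //; exact/mem_set.
Qed.

Lemma m0T d (T : measurableType d) (R : realType) (mu : probability T R) :
  m0 mu setT = 1.
Proof. by rewrite /m0 probability_setT. Qed.

Lemma m00 d (T : measurableType d) (R : realType) (mu : probability T R) :
  m0 mu set0 = 0.
Proof. by rewrite /m0 measure0. Qed.

Lemma m0D d (T : measurableType d) (R : realType) (mu : probability T R) X Y :
  measurable X -> measurable Y -> Y `<=` X ->
  m0 mu (X `\` Y) = m0 mu X - m0 mu Y.
Proof.
move=> mX mY YX.
have := @m0U _ _ _ mu _ _ (measurableD mX mY) mY.
rewrite setDKU // => ->; first by rewrite addrK.
by rewrite setDE -setIA setICl setI0.
Qed.

Lemma m0C d (T : measurableType d) (R : realType) (mu : probability T R) X :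
  measurable X -> m0 mu (~` X) = 1 - m0 mu X.
Proof. by move=> mX; rewrite -setTD m0D // m0T. Qed.
Lemma decr_le T (C : nat -> set T) : (forall n, C n.+1 `<=` C n) ->
  forall a b, (a <= b)%N -> C b `<=` C a.
Proof.
move=> dC a; elim=> [|b IH]; first by rewrite leqn0 => /eqP ->.
rewrite leq_eqVlt => /orP [/eqP -> //|]; rewrite ltnS => /IH.
exact: subset_trans (dC b).
Qed.

Arguments decr_le {T C} dC {a b}.

Lemma uca d (T : measurableType d) (R : realType) (nu : nat -> set T -> R)
 (nuU : forall m X Y, measurable X -> measurable Y -> X `&` Y = set0 ->
    nu m (X `|` Y) = nu m X + nu m Y)
 (nu_le : forall m X Y, measurable X -> measurable Y -> X `<=` Y ->
    nu m X <= nu m Y)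
 (nu_cont : forall m (C : nat -> set T), (forall n, measurable (C n)) ->
    (forall n, C n.+1 `<=` C n) -> \bigcap_n C n = set0 ->
    forall e, 0 < e -> exists N, nu m (C N) < e)
 (nu_cauchy : forall X, measurable X -> forall e, 0 < e -> exists M,
    forall m m', (M <= m)%N -> (M <= m')%N -> `|nu m X - nu m' X| < e)
 (C : nat -> set T) (mC : forall n, measurable (C n))
 (dC : forall n, C n.+1 `<=` C n) (C0 : \bigcap_n C n = set0) :
 forall e, 0 < e -> exists N, forall m, nu m (C N) < e.
Proof.
move=> e e0.
have cont : forall m e', 0 < e' -> exists N, forall n, (N <= n)%N -> nu m (C n) < e'.
  move=> m e' e'0; have [N HN] := nu_cont m C mC dC C0 e' e'0.
  exists N => n Nn; apply: le_lt_trans HN.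
  by apply: nu_le => //; exact: decr_le.
have fin : forall M, exists N, forall m, (m < M)%N -> forall n, (N <= n)%N ->
    nu m (C n) < e.
  elim=> [|M [N HN]]; first by exists 0%N.
  have [N' HN'] := cont M e e0.
  exists (maxn N N') => m; rewrite ltnS leq_eqVlt => /orP [/eqP ->|mM] n.
    by rewrite geq_max => /andP [_]; exact: HN'.
  by rewrite geq_max => /andP [+ _]; exact: HN.
apply: contrapT => H.
have H' : forall N, exists m, e <= nu m (C N).
  move=> N; apply: contrapT => K; apply: H; exists N => m.
  rewrite ltNge; apply/negP => Hle; apply: K; by exists m.
pose Inv (st : set T * nat * nat) := measurable st.1.1 /\ st.1.1 `&` C st.1.2 = set0.
pose Rel (st st' : set T * nat * nat) :=
  [/\ st.1.1 `<=` st'.1.1, st'.1.1 `<=` st.1.1 `|` C st.1.2,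
      (st.1.2 <= st'.1.2)%N, (st.2 < st'.2)%N &
      exists m M, [/\ (st.2 <= m)%N, (st.2 <= M)%N &
        forall U, measurable U -> st'.1.1 `<=` U -> U `<=` st'.1.1 `|` C st'.1.2 ->
          e / 4 < nu m U - nu M U]].
have step : forall st, exists st', Inv st -> Inv st' /\ Rel st st'.
  move=> [[P n] M0].
  have [HI|HI] := pselect (Inv (P, n, M0)); last by exists (P, n, M0).
  case: HI => /= mP PC.
  have e8 : 0 < e / 8 by rewrite divr_gt0.
  have e2 : 0 < e / 2 by rewrite divr_gt0.
  have [M HM] := nu_cauchy P mP (e / 8) e8.
  pose M1 := maxn M M0.
  have [n1' Hn1] := cont M1 (e / 8) e8.
  pose n1 := maxn n n1'.
  have [N2 HN2] := fin M1.
  pose n2 := maxn n1 N2.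
  have [m Hm] := H' n2.
  have mM1 : (M1 <= m)%N.
    rewrite leqNgt; apply/negP => mlt.
    by have := HN2 m mlt n2 (leq_maxr _ _); rewrite ltNge Hm.
  have [n3' Hn3] := cont m (e / 2) e2.
  pose n3 := maxn n2 n3'.
  have nn1 : (n <= n1)%N by rewrite leq_maxl.
  have n12 : (n1 <= n2)%N by rewrite leq_maxl.
  have n23 : (n2 <= n3)%N by rewrite leq_maxl.
  have Cn3n2 := decr_le dC n23.
  have Cn2n1 := decr_le dC n12.
  have Cn1n := decr_le dC nn1.
  have mpiece : measurable (C n2 `\` C n3) by exact: measurableD.
  have piece0 : (C n2 `\` C n3) `&` C n3 = set0.
    by apply/seteqP; split=> x // [[_ ?] ?].
  have PCn1 : P `&` C n1 = set0.
    by apply/seteqP; split=> x // [Px Cx]; rewrite -PC; split => //; exact: Cn1n.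
  have Ppiece : P `&` (C n2 `\` C n3) = set0.
    apply/seteqP; split=> x // [Px [Cx _]]; rewrite -PCn1; split => //.
    exact: Cn2n1.
  exists (P `|` (C n2 `\` C n3), n3, m.+1) => _; split.
    split => /=; first exact: measurableU.
    apply/seteqP; split=> x // [[Px|[_ nCx]] Cx] //.
    rewrite -PC; split => //; apply: (decr_le dC (leq_trans nn1 (leq_trans n12 n23))).
    exact: Cx.
  split => /=.
  - exact: subsetUl.
  - move=> x /= [Px|[Cx _]]; [by left|right; apply: Cn1n; apply: Cn2n1; exact: Cx].
  - exact: (leq_trans nn1 (leq_trans n12 n23)).
  - by rewrite ltnS (leq_trans _ mM1) // leq_maxr.
  exists m, M1; split.
  - by rewrite (leq_trans _ mM1) // leq_maxr.
  - by rewrite leq_maxr.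
  move=> U mU PU UP.
  have lo : nu m (P `|` (C n2 `\` C n3)) <= nu m U.
    by apply: nu_le => //; exact: measurableU.
  rewrite nuU // in lo.
  have eC2 : nu m (C n2) = nu m (C n2 `\` C n3) + nu m (C n3).
    by rewrite -nuU // setDKU.
  have hC3 : nu m (C n3) < e / 2 by apply: Hn3; rewrite leq_maxr.
  have hP : `|nu m P - nu M1 P| < e / 8.
    by apply: HM; [exact: leq_trans (leq_maxl _ _) mM1|exact: leq_maxl].
  have hi : nu M1 U <= nu M1 (P `|` C n1).
    apply: nu_le => //; first exact: measurableU.
    move=> x /UP [[Px|[Cx _]]|Cx]; [by left|right|right].
      exact: (Cn2n1 _ Cx).
    exact: (Cn2n1 _ (Cn3n2 _ Cx)).
  rewrite nuU // in hi.
  have hC1 : nu M1 (C n1) < e / 8 by apply: Hn1; rewrite leq_maxr.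
  move: hP; rewrite ltr_norml => /andP [hP1 hP2].
  lra.
have [f Hf] := choice step.
pose s k := iter k f (set0, 0%N, 0%N).
have Is : forall k, Inv (s k).
  elim=> [|k IH]; first by split; [exact: measurable0|rewrite set0I].
  exact: (Hf _ IH).1.
have Rs : forall k, Rel (s k) (s k.+1) := fun k => (Hf _ (Is k)).2.
have Pinc : forall k t, (k <= t)%N -> (s k).1.1 `<=` (s t).1.1.
  move=> k; elim=> [|t IH]; first by rewrite leqn0 => /eqP ->.
  rewrite leq_eqVlt => /orP [/eqP -> //|]; rewrite ltnS => /IH kt.
  by case: (Rs t) => + _ _ _ _; exact: subset_trans.
have ninc : forall k t, (k <= t)%N -> ((s k).1.2 <= (s t).1.2)%N.
  move=> k; elim=> [|t IH]; first by rewrite leqn0 => /eqP ->.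
  rewrite leq_eqVlt => /orP [/eqP -> //|]; rewrite ltnS => /IH kt.
  by case: (Rs t) => _ _ + _ _; exact: leq_trans.
have Mge : forall k, (k <= (s k).2)%N.
  elim=> [//|k IH]; case: (Rs k) => _ _ _ + _; exact: leq_ltn_trans.
have Psub : forall k t, (k <= t)%N -> (s t).1.1 `<=` (s k).1.1 `|` C (s k).1.2.
  move=> k; elim=> [|t IH]; first by rewrite leqn0 => /eqP -> ; exact: subsetUl.
  rewrite leq_eqVlt => /orP [/eqP ->|]; first exact: subsetUl.
  rewrite ltnS => kt.
  case: (Rs t) => _ Hsub _ _ _ x /Hsub [/(IH kt) //|Cx]; right.
  exact: (decr_le dC (ninc _ _ kt) _ Cx).
pose U := \bigcup_t (s t).1.1.
have mU : measurable U by apply: bigcupT_measurable => t; exact: (Is t).1.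
have e4 : 0 < e / 4 by rewrite divr_gt0.
have [K HK] := nu_cauchy U mU (e / 4) e4.
case: (Rs K) => _ _ _ _ [m [M [Km KM gap]]].
have := gap U mU _ _.
have /= := HK m M (leq_trans (Mge K) Km) (leq_trans (Mge K) KM).
rewrite ltr_norml => /andP [h1 h2] h3.
have : e / 4 < nu m U - nu M U.
  apply: h3.
    by move=> x Px; exists K.+1.
  move=> x [t _ Ptx]; case: (leqP t K.+1) => ht.
    by left; exact: (Pinc _ _ ht _ Ptx).
  exact: (Psub _ _ (ltnW ht) _ Ptx).
lra.
Qed.

Definition Fm d (T : measurableType d) (R : realType) (mu : probability T R)
  (X Y : set T) : R := m0 mu (X `&` Y) - m0 mu X * m0 mu Y.
Arguments Fm {d T R} mu X Y.

Lemma Fm_sym d (T : measurableType d) (R : realType) (mu : probability T R) X Y :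
  Fm mu X Y = Fm mu Y X.
Proof. by rewrite /Fm setIC mulrC. Qed.

Lemma Fm_U d (T : measurableType d) (R : realType) (mu : probability T R) X Y1 Y2 :
  measurable X -> measurable Y1 -> measurable Y2 -> Y1 `&` Y2 = set0 ->
  Fm mu X (Y1 `|` Y2) = Fm mu X Y1 + Fm mu X Y2.
Proof.
move=> mX m1 m2 d12; rewrite /Fm setIUr !m0U //; first by ring.
- exact: measurableI.
- exact: measurableI.
- by rewrite setIACA d12 setI0.
Qed.

Lemma Fm_0 d (T : measurableType d) (R : realType) (mu : probability T R) X :
  Fm mu X set0 = 0.
Proof. by rewrite /Fm setI0 m00 mulr0 subrr. Qed.

Lemma Fm_T d (T : measurableType d) (R : realType) (mu : probability T R) X :
  Fm mu X setT = 0.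
Proof. by rewrite /Fm setIT m0T mulr1 subrr. Qed.

Lemma Fm_C d (T : measurableType d) (R : realType) (mu : probability T R) X Y :
  measurable X -> measurable Y -> Fm mu X (~` Y) = - Fm mu X Y.
Proof.
move=> mX mY; have := Fm_U mu mX mY (measurableC mY) (setICr Y).
by rewrite setUv Fm_T => h; lra.
Qed.

Lemma Fm_abs_le d (T : measurableType d) (R : realType) (mu : probability T R) X Y :
  measurable X -> measurable Y -> `|Fm mu X Y| <= m0 mu Y.
Proof.
move=> mX mY; rewrite /Fm.
have h1 : m0 mu (X `&` Y) <= m0 mu Y by apply: m0_le => //; exact: measurableI.
have h2 := m0_ge0 mu (X `&` Y).
have h3 := m0_ge0 mu X; have h4 := m0_ge0 mu Y; have h5 := m0_le1 mu mX.
have h6 : m0 mu X * m0 mu Y <= m0 mu Y by rewrite ler_piMl.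
have h7 : 0 <= m0 mu X * m0 mu Y by rewrite mulr_ge0.
rewrite ler_norml; apply/andP; split; lra.
Qed.

Lemma Fm_diff d (T : measurableType d) (R : realType) (mu : probability T R) X Y Y' :
  measurable X -> measurable Y -> measurable Y' -> Y' `<=` Y ->
  `|Fm mu X Y - Fm mu X Y'| <= m0 mu (Y `\` Y').
Proof.
move=> mX mY mY' sY.
have mD : measurable (Y `\` Y') by exact: measurableD.
have := Fm_U mu mX mD mY' _; rewrite setDKU // => ->; last first.
  by apply/seteqP; split=> x // [[_ ?] ?].
by rewrite addrK; exact: Fm_abs_le.
Qed.

Definition preiter' (T : Type) (S : T -> T) k (A : set T) := preiter S k A.

Lemma preiter_measurable d (T : measurableType d) (S : T -> T) :
  measurable_fun setT S -> forall k A, measurable A -> measurable (preiter S k A).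
Proof.
move=> mS; elim=> [|k IH] A mA; first exact: mA.
have -> : preiter S k.+1 A = preiter S k (S @^-1` A) by [].
apply: IH; rewrite -[_ @^-1` _]setTI; exact: mS.
Qed.

Lemma preiterD (T : Type) (S : T -> T) i k A :
  preiter S k (preiter S i A) = preiter S (i + k) A.
Proof. by apply/seteqP; split => x; rewrite /preiter /preimage /= iterD. Qed.

Definition nuS d (T : measurableType d) (R : realType) (mu : probability T R)
  (S : T -> T) (m : nat) (E : set T) : R := m0 mu (preiter S m E).
Arguments nuS {d T R} mu S m E.

Lemma nuS_U d (T : measurableType d) (R : realType) (mu : probability T R) S :
  measurable_fun setT S -> forall m X Y, measurable X -> measurable Y ->
  X `&` Y = set0 -> nuS mu S m (X `|` Y) = nuS mu S m X + nuS mu S m Y.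
Proof.
move=> mS m X Y mX mY XY; rewrite /nuS /preiter preimage_setU m0U //.
- exact: preiter_measurable.
- exact: preiter_measurable.
- by rewrite -preimage_setI XY preimage_set0.
Qed.

Lemma nuS_le d (T : measurableType d) (R : realType) (mu : probability T R) S :
  measurable_fun setT S -> forall m X Y, measurable X -> measurable Y ->
  X `<=` Y -> nuS mu S m X <= nuS mu S m Y.
Proof.
move=> mS m X Y mX mY XY; apply: m0_le; try exact: preiter_measurable.
by move=> x; apply: XY.
Qed.

Lemma nuS_cont d (T : measurableType d) (R : realType) (mu : probability T R) S :
  measurable_fun setT S -> forall m (C : nat -> set T),
  (forall n, measurable (C n)) -> (forall n, C n.+1 `<=` C n) ->
  \bigcap_n C n = set0 -> forall e, 0 < e -> exists N, nuS mu S m (C N) < e.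
Proof.
move=> mS m C mC dC C0 e e0.
pose D n := preiter S m (C n).
have mD : forall n, measurable (D n) by move=> n; exact: preiter_measurable.
have D0 : \bigcap_n D n = set0 by rewrite /D /preiter -preimage_bigcap C0 preimage_set0.
have := @nonincreasing_cvg_mu _ _ _ mu D _ mD _ _.
rewrite D0 measure0 => /(_ _ _ _)/fine_cvgP [].
- by apply: (le_lt_trans (probability_le1 mu (mD 0%N))); rewrite ltey.
- exact: measurable0.
- move=> a b ab; rewrite subsetEset => x; exact: (decr_le dC ab).
move=> _ /cvgrPdist_lt /(_ e e0) [N _ HN]; exists N.
have := HN N (leqnn N); rewrite sub0r normrN => h.
exact: le_lt_trans (ler_norm _) h.
Qed.

Lemma nuS_cauchy d (T : measurableType d) (R : realType) (mu : probability T R) S :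
  measurable_fun setT S -> asymptotically_stationary mu S ->
  forall X, measurable X -> forall e, 0 < e -> exists M,
    forall m m', (M <= m)%N -> (M <= m')%N -> `|nuS mu S m X - nuS mu S m' X| < e.
Proof.
move=> mS hst X mX e e0.
have mP : forall k, measurable (preiter S k X) by move=> k; exact: preiter_measurable.
have [[r| |] hl] := hst X mX.
- have e2 : 0 < e / 2 by rewrite divr_gt0.
  move/fine_cvgP : hl => [_ /cvgrPdist_lt /(_ (e / 2) e2)].
  move=> [N _ HN]; exists N => m m' Nm Nm'.
  have := HN m Nm; have := HN m' Nm'.
  rewrite /nuS /m0 /= !ltr_norml => /andP [h1 h2] /andP [h3 h4].
  apply/andP; split; lra.
- move/cvgeyPge : hl => /(_ 2%R) [N _ HN].
  have := HN N (leqnn N); have := probability_le1 mu (mP N).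
  move=> h1 h2; have := le_trans h2 h1; rewrite lee_fin => h; lra.
- move/cvgeNyPle : hl => /(_ (-1)%R) [N _ HN].
  have := HN N (leqnn N); have := measure_ge0 mu (preiter S N X).
  move=> h1 h2; have := le_trans h1 h2; rewrite lee_fin => h; lra.
Qed.

Definition GP d (T : measurableType d) (R : realType) (mu : probability T R)
  (S : T -> T) (X : nat -> nat -> set T) (j : nat -> nat -> nat) (B : set T) : Prop :=
  forall e, 0 < e -> exists K, forall k, (K <= k)%N -> forall i, (0 < i)%N ->
    `|Fm mu (X k i) (preiter S (j k i) B)| <= e.
Arguments GP {d T R} mu S X j B.

Lemma GP_T d (T : measurableType d) (R : realType) (mu : probability T R) S X j :
  GP mu S X j setT.
Proof.
move=> e e0; exists 0%N => k _ i _.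
by rewrite /preiter preimage_setT Fm_T normr0 ltW.
Qed.

Lemma GP_0 d (T : measurableType d) (R : realType) (mu : probability T R) S X j :
  GP mu S X j set0.
Proof.
move=> e e0; exists 0%N => k _ i _.
by rewrite /preiter preimage_set0 Fm_0 normr0 ltW.
Qed.

Lemma GP_C d (T : measurableType d) (R : realType) (mu : probability T R) S X j B :
  measurable_fun setT S -> (forall k i, measurable (X k i)) -> measurable B ->
  GP mu S X j B -> GP mu S X j (~` B).
Proof.
move=> mS mX mB H e e0; have [K HK] := H e e0; exists K => k Kk i i0.
rewrite /preiter -preimage_setC Fm_C ?normrN; first exact: HK.
- exact: mX.
- exact: preiter_measurable.
Qed.

Lemma GP_U d (T : measurableType d) (R : realType) (mu : probability T R) S X j B1 B2 :
  measurable_fun setT S -> (forall k i, measurable (X k i)) -> measurable B1 ->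
  measurable B2 -> B1 `&` B2 = set0 ->
  GP mu S X j B1 -> GP mu S X j B2 -> GP mu S X j (B1 `|` B2).
Proof.
move=> mS mX m1 m2 d12 H1 H2 e e0.
have e2 : 0 < e / 2 by rewrite divr_gt0.
have [K1 HK1] := H1 _ e2; have [K2 HK2] := H2 _ e2.
exists (maxn K1 K2) => k; rewrite geq_max => /andP [k1 k2] i i0.
rewrite /preiter preimage_setU Fm_U.
- apply: (le_trans (ler_normD _ _)).
  have := HK1 k k1 i i0; have := HK2 k k2 i i0; rewrite /preiter => h1 h2; lra.
- exact: mX.
- exact: preiter_measurable.
- exact: preiter_measurable.
- by rewrite -preimage_setI d12 preimage_set0.
Qed.

Lemma GP_bigcup d (T : measurableType d) (R : realType) (mu : probability T R) S X j
  (F : nat -> set T) :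
  measurable_fun setT S -> asymptotically_stationary mu S ->
  (forall k i, measurable (X k i)) ->
  (forall n, measurable (F n)) -> trivIset setT F ->
  (forall n, GP mu S X j (F n)) -> GP mu S X j (\bigcup_n F n).
Proof.
move=> mS hst mX mF tF HF e e0.
pose G N := \bigcup_(k in [set k | (k < N)%N]) F k.
pose C N := \bigcup_(k in [set k | (N <= k)%N]) F k.
have mG : forall N, measurable (G N) by move=> N; exact: bigcup_measurable.
have mC : forall N, measurable (C N) by move=> N; exact: bigcup_measurable.
have mB : measurable (\bigcup_n F n) by exact: bigcupT_measurable.
have GPG : forall N, GP mu S X j (G N).
  elim=> [|N IH].
    have -> : G 0%N = set0 by apply/seteqP; split=> x // [k]; rewrite /= ltn0.
    exact: GP_0.
  have -> : G N.+1 = G N `|` F N.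
    apply/seteqP; split=> x.
      move=> [k /=]; rewrite ltnS leq_eqVlt => /orP [/eqP -> Fx|kN Fx].
        by right.
      by left; exists k.
    move=> [[k /= kN Fx]|Fx].
      by exists k => //=; exact: ltnW.
    by exists N => //=.
  apply: GP_U => //.
  apply/seteqP; split=> x // [[k /= kN Fkx] FNx].
  have kN' : k = N by apply: tF => //; exists x.
  by move: kN; rewrite kN' ltnn.
have dC : forall n, C n.+1 `<=` C n.
  by move=> n x [k /= nk Fx]; exists k => //=; exact: ltnW.
have C0 : \bigcap_n C n = set0.
  apply/seteqP; split=> x // Cx.
  have [k0 _ F0] := Cx 0%N I.
  have [k1 /= k01 F1] := Cx k0.+1 I.
  have e01 : k0 = k1 by apply: tF => //; exists x.
  by move: k01; rewrite e01 ltnn.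
have e2 : 0 < e / 2 by rewrite divr_gt0.
have [N HN] := uca (nuS_U mu mS) (nuS_le mu mS) (nuS_cont mu mS)
  (nuS_cauchy mS hst) mC dC C0 e2.
have [K HK] := GPG N _ e2.
exists K => k Kk i i0.
have mY : forall A, measurable A -> measurable (preiter S (j k i) A).
  by move=> A mA; exact: preiter_measurable.
have hdiff := Fm_diff mu (mX k i) (mY _ mB) (mY _ (mG N)) _.
have sub : preiter S (j k i) (\bigcup_n F n) `\` preiter S (j k i) (G N)
    `<=` preiter S (j k i) (C N).
  move=> x [[n _ Fx] nG]; exists n => //=.
  by rewrite leqNgt; apply/negP => nN; apply: nG; exists n.
have hle : m0 mu (preiter S (j k i) (\bigcup_n F n) `\` preiter S (j k i) (G N))
    <= nuS mu S (j k i) (C N).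
  apply: m0_le sub; last exact: mY.
  by apply: measurableD; exact: mY.
have hsub : preiter S (j k i) (G N) `<=` preiter S (j k i) (\bigcup_n F n).
  by move=> x [n _ Fx]; exists n.
have h1 := hdiff hsub.
have h2 := HK k Kk i i0.
have h3 := HN (j k i).
have := ler_normD (Fm mu (X k i) (preiter S (j k i) (\bigcup_n F n))
   - Fm mu (X k i) (preiter S (j k i) (G N))) (Fm mu (X k i) (preiter S (j k i) (G N))).
rewrite subrK => h4; lra.
Qed.

Lemma GP_all d (T : measurableType d) (R : realType) (mu : probability T R) S
  X j (Pi : set (set T)) :
  measurable_fun setT S -> asymptotically_stationary mu S -> setI_closed Pi ->
  (@measurable d T) = <<s Pi >> -> (forall k i, measurable (X k i)) ->
  (forall B, Pi B -> GP mu S X j B) -> forall B, measurable B -> GP mu S X j B.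
Proof.
move=> mS hst hPi hgen mX hP B mB.
apply: (dynkin_induction hgen hPi).
- exact: GP_T.
- exact: hP.
- by move=> A mA; exact: GP_C.
- by move=> F mF tF HF; exact: GP_bigcup.
- by rewrite -hgen.
Qed.

Local Open Scope ereal_scope.

Lemma term_eq d (T : measurableType d) (R : realType) (mu : probability T R) X Y :
  measurable X -> measurable Y ->
  `| mu (X `&` Y) - mu X * mu Y | = (`|Fm mu X Y|%R)%:E.
Proof.
move=> mX mY.
rewrite (m0E mu (measurableI _ _ mX mY)) (m0E mu mX) (m0E mu mY).
by rewrite -EFinM -EFinB abse_EFin.
Qed.

Lemma mix_to_GP d (T : measurableType d) (R : realType) (mu : probability T R) S A B :
  measurable_fun setT S -> measurable A -> measurable B ->
  mixing_sup mu S A B k @[k --> \oo] --> 0 ->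
  GP mu S (fun k i => preiter S i A) (fun k i => (i + k)%N) B.
Proof.
move=> mS mA mB /fine_cvgP [[N1 _ HN1] /cvgrPdist_le H] e e0.
have [N2 _ HN2] := H e e0.
exists (maxn N1 N2) => k; rewrite geq_max => /andP [k1 k2] i i0.
have fin := HN1 k k1.
have h := HN2 k k2.
have : (`|Fm mu (preiter S i A) (preiter S (i + k) B)|%R)%:E <= mixing_sup mu S A B k.
  rewrite -preiterD -term_eq; try (apply: preiter_measurable => //; try apply: preiter_measurable => //).
  by apply: ereal_sup_ubound; exists i.
rewrite -(fineK fin) lee_fin => h'.
move: h; rewrite /= sub0r normrN => h.
exact: le_trans h' (le_trans (ler_norm _) h).
Qed.

Lemma GP_to_mix d (T : measurableType d) (R : realType) (mu : probability T R) S A B :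
  measurable_fun setT S -> measurable A -> measurable B ->
  GP mu S (fun k i => preiter S i A) (fun k i => (i + k)%N) B ->
  mixing_sup mu S A B k @[k --> \oo] --> 0.
Proof.
move=> mS mA mB H.
have bound : forall e : R, (0 < e)%R -> exists K, forall k, (K <= k)%N ->
    0 <= mixing_sup mu S A B k /\ mixing_sup mu S A B k <= e%:E.
  move=> e e0; have [K HK] := H e e0; exists K => k Kk; split.
    apply: (le_trans _ (ereal_sup_ubound _)); last by exists 1%N.
    exact: abse_ge0.
  apply: ge_ereal_sup => y [i i0 <-].
  rewrite preiterD term_eq; try exact: preiter_measurable.
  by rewrite lee_fin; exact: HK.
have finb : forall k e, 0 <= mixing_sup mu S A B k -> mixing_sup mu S A B k <= e%:E ->
    mixing_sup mu S A B k \is a fin_num.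
  move=> k e h0 h1; rewrite ge0_fin_numE //; exact: le_lt_trans h1 (ltry _).
apply/fine_cvgP; split.
  have [K HK] := bound 1%R ltr01; exists K => // k /= Kk.
  by have [h0 h1] := HK k Kk; exact: finb h0 h1.
apply/cvgrPdist_le => e e0; have [K HK] := bound e e0; exists K => // k /= Kk.
have [h0 h1] := HK k Kk.
have fin := finb _ _ h0 h1.
rewrite sub0r normrN ger0_norm ?fine_ge0 //.
by rewrite -lee_fin fineK.
Qed.

Theorem lemma2p2 (d : measure_display) (T : measurableType d) (R : realType)
  (mu : probability T R) (S : T -> T) (Pi : set (set T)) :
  measurable_fun setT S ->
  asymptotically_stationary mu S ->
  setI_closed Pi ->
  (@measurable d T) = <<s Pi >> ->
  (forall A B, Pi A -> Pi B -> mixing_sup mu S A B k @[k --> \oo] --> 0) ->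
  forall A B, measurable A -> measurable B ->
    mixing_sup mu S A B k @[k --> \oo] --> 0.
Proof.
move=> mS hst hPi hgen hmix A B mA mB.
have PiM : forall Z, Pi Z -> measurable Z.
  by move=> Z PZ; rewrite hgen; exact: sub_gen_smallest.
have step1 : forall A0, Pi A0 -> forall B0, measurable B0 ->
    GP mu S (fun k i => preiter S i A0) (fun k i => (i + k)%N) B0.
  move=> A0 PA; apply: (GP_all mS hst hPi hgen).
    by move=> k i; exact: preiter_measurable (PiM _ PA).
  move=> B0 PB; apply: mix_to_GP => //; [exact: PiM|exact: PiM|exact: hmix].
have step2 : forall A0, measurable A0 ->
    GP mu S (fun k i => preiter S (i + k) B) (fun k i => i) A0.
  apply: (GP_all mS hst hPi hgen).
    by move=> k i; exact: preiter_measurable.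
  move=> A0 PA e e0; have [K HK] := step1 A0 PA B mB e e0.
  by exists K => k Kk i i0; rewrite Fm_sym; exact: HK.
apply: GP_to_mix => // e e0; have [K HK] := step2 A mA e e0.
by exists K => k Kk i i0; rewrite Fm_sym; exact: HK.
Qed.
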